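(* Let $G=(V,F,E)$ be a factor tree, i.e. a connected bipartite graph without cycles whose vertices are partitioned into variable nodes $V$ and factor nodes $F$, with every edge joining a variable node to a factor node. For $j\in V$ let $N(j)\subset F$ be its neighbouring factor nodes and $N_j=|N(j)|$; for $\alpha\in F$ let $N(\alpha)\subset V$ be its neighbouring variable nodes. Choose real numbers $c_\alpha>0$ for $\alpha\in F$ and $c_j\ge 0$ for $j\in V$ such that $\sum_{j\in V}c_j+\sum_{\alpha\in F}c_\alpha=1$. For every edge $(j,\alpha)\in E$ with $j\in V$, $\alpha\in F$, removing this edge splits $G$ into two trees; let $G_{1,j\alpha}=(V_{1,j\alpha},F_{1,j\alpha},E_{1,j\alpha})$ be the one containing $j$, and define $$c_{j\alpha}=\sum_{i\in V_{1,j\alpha}}c_i+\sum_{\beta\in F_{1,j\alpha}}c_\beta.$$ Then $c_\alpha>0$, $c_j\ge 0$, $c_{j\alpha}\ge 0$ for all $j\in V$, $\alpha\in F$, and $$c_j-\sum_{\alpha\in N(j)}c_{j\alpha}=1-N_j\quad\text{for all }j\in V,\qquad c_\alpha+\sum_{j\in N(\alpha)}c_{j\alpha}=1\quad\text{for all }\alpha\in F.$$ *)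

(* Defs.v *)
From mathcomp Require Import all_boot all_order all_algebra.
Set Implicit Arguments. Unset Strict Implicit. Unset Printing Implicit Defensive.
Import Order.TTheory GRing.Theory Num.Theory.

Definition fg_adj (V F : finType) (e : V -> F -> bool) : rel (V + F) :=
  fun x y =>
    match x, y with
    | inl j, inr a => e j a
    | inr a, inl j => e j a
    | _, _ => false
    end.

Definition fg_connected (V F : finType) (e : V -> F -> bool) : Prop :=
  forall x y : V + F, connect (fg_adj e) x y.

Definition fg_acyclic (V F : finType) (e : V -> F -> bool) : Prop :=
  forall s : seq (V + F), 2 < size s -> uniq s -> ~~ cycle (fg_adj e) s.

Definition factor_tree (V F : finType) (e : V -> F -> bool) : Prop :=
  fg_connected e /\ fg_acyclic e.

Definition fg_adj_rm (V F : finType) (e : V -> F -> bool) (j : V) (a : F)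
  : rel (V + F) :=
  fun x y => fg_adj e x y &&
    ~~ (((x == inl j) && (y == inr a)) || ((x == inr a) && (y == inl j))).

Definition fg_weight (R : nzRingType) (V F : finType)
  (cV : V -> R) (cF : F -> R) (x : V + F) : R :=
  match x with inl i => cV i | inr b => cF b end.

Definition c_edge (R : nzRingType) (V F : finType) (e : V -> F -> bool)
  (cV : V -> R) (cF : F -> R) (j : V) (a : F) : R :=
  (\sum_(x : V + F | connect (fg_adj_rm e j a) (inl j) x) fg_weight cV cF x)%R.

(* Main.v *)
Require Import Defs.
From mathcomp Require Import all_boot all_order all_algebra.
From mathcomp Require Import lra.
Import Order.TTheory GRing.Theory Num.Theory.

Section Gen.
Variables (T : finType) (r : rel T).
Hypothesis rsym : symmetric r.
Hypothesis rirr : irreflexive r.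
Hypothesis acyc : forall s : seq T, 2 < size s -> uniq s -> ~~ cycle r s.
Hypothesis conn : forall x y, connect r x y.

Definition rm (x y : T) : rel T := fun p q =>
  r p q && ~~ (((p == x) && (q == y)) || ((p == y) && (q == x))).

Lemma rm_sym x y : symmetric (rm x y).
Proof.
move=> p q; rewrite /rm rsym; congr (_ && ~~ _).
by case: (p == x); case: (q == y); case: (p == y); case: (q == x).
Qed.

Lemma rm_swap x y : rm x y =2 rm y x.
Proof.
move=> p q; rewrite /rm; congr (_ && ~~ _).
by case: (p == x); case: (q == y); case: (p == y); case: (q == x).
Qed.

Lemma rm_sub x y : subrel (rm x y) r.
Proof. by move=> p q /andP[]. Qed.

Lemma noback x y : r x y -> ~~ connect (rm x y) y x.
Proof.
move=> rxy; apply/negP => /connectP[p pp lp].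
case: (shortenP pp) lp => p' pp' up' _ lp.
have xy : x != y by apply/eqP => exy; move: rxy; rewrite exy rirr.
have := @acyc (y :: p'); rewrite up' /= rcons_path (sub_path (@rm_sub x y) pp').
rewrite -lp rxy /=.
case: p' pp' up' lp => [|z [|z2 p']] pp' up' lp H.
- by move: xy; rewrite lp eqxx.
- by move: pp'; rewrite /= /rm lp /= !eqxx orbT !andbF.
- by move: (H isT isT).
Qed.

Lemma split x y z : r x y -> connect (rm x y) x z || connect (rm x y) y z.
Proof.
move=> rxy; have /connectP[p pp lp] := conn z x.
suff: connect (rm x y) z x || connect (rm x y) z y.
  by case/orP => H; apply/orP; [left|right]; rewrite (sym_connect_sym (@rm_sym x y)).
elim: p z pp lp => [|z1 p IH] z /=.
  by move=> _ ->; rewrite connect0.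
move=> /andP[rz pp] lp; have := IH _ pp lp.
case hx: (z == x); first by rewrite (eqP hx) connect0.
case hy: (z == y); first by rewrite (eqP hy) connect0 orbT.
have h : rm x y z z1 by rewrite /rm rz hx hy.
by case/orP => H; apply/orP; [left|right]; apply: connect_trans (connect1 h) H.
Qed.

Lemma exist_nb v z : z != v -> exists u, r v u && connect (rm v u) u z.
Proof.
have /connectP[p pp lp] := conn z v.
elim: p z pp lp => [|z1 p IH] z /=.
  by move=> _ ->; rewrite eqxx.
move=> /andP[rz pp] lp zv.
case z1v: (z1 == v).
  by exists z; rewrite rsym -(eqP z1v) rz connect0.
have [u /andP[rvu cu]] := IH _ pp lp (negbT z1v).
exists u; rewrite rvu /=; apply: connect_trans cu (connect1 _).
by rewrite /rm rsym rz /= (negbTE zv) z1v /= andbF.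
Qed.

Lemma uniq_nb v z u w : r v u -> r v w -> connect (rm v u) u z ->
  connect (rm v w) w z -> u = w.
Proof.
move=> rvu rvw /connectP[p pp lp] cw; apply/eqP/negPn/negP => uw.
have nv : all (fun t => t != v) (u :: p).
  apply/allP => t tin; apply/negP => /eqP tv.
  have := path_connect pp tin; rewrite tv => H.
  by move: (noback v u rvu); rewrite H.
have pw : path (rm v w) u p.
  apply: (sub_in_path (P := fun t => t != v)) _ nv pp.
  move=> a b an bn /andP[rab _]; rewrite /rm rab /=.
  by rewrite (negbTE an) (negbTE bn) /= andbF.
have cuz : connect (rm v w) u z by apply/connectP; exists p.
have cwu : connect (rm v w) w u.
  by apply: connect_trans cw _; rewrite (sym_connect_sym (@rm_sym v w)).
have ruv : rm v w u v.
  rewrite /rm rsym rvu /= eqxx andbT.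
  have -> : (u == v) = false by apply/negbTE; move: (allP nv u (mem_head _ _)).
  by rewrite (negbTE uw).
by move: (noback v w rvw); rewrite (connect_trans cwu (connect1 ruv)).
Qed.

Lemma part_sum (R : zmodType) (w : T -> R) v :
  (\sum_(u | r v u) \sum_(z | connect (rm v u) u z) w z
   = \sum_(z | z != v) w z)%R.
Proof.
rewrite (exchange_big_dep (fun z => z != v)) /=; last first.
  move=> u z rvu cz; apply/negP => /eqP zv; move: cz; rewrite zv => cz.
  by move: (noback v u rvu); rewrite cz.
apply: eq_bigr => z zv.
have [u0 /andP[r0 c0]] := exist_nb v z zv.
rewrite (bigD1 u0) /=; last by rewrite r0 c0.
rewrite big_pred0 ?addr0 // => u.
apply/negP => /andP[/andP[ru cu] nu].
by move: nu; rewrite (uniq_nb v z u0 u r0 ru c0 cu) eqxx.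
Qed.
End Gen.
Arguments rm {T} r x y.
Arguments rm_sym {T r}.
Arguments noback {T r}.
Arguments split {T r}.
Arguments part_sum {T r}.

Local Open Scope ring_scope.

Lemma sumD1 (T : finType) (R : zmodType) (w : T -> R) v :
  \sum_z w z = w v + \sum_(z | z != v) w z.
Proof. by rewrite (bigD1 v). Qed.

Theorem proposition1 (R : realFieldType) (V F : finType) (e : V -> F -> bool)
  (cV : V -> R) (cF : F -> R) :
  factor_tree e ->
  (forall a, 0 < cF a) ->
  (forall j, 0 <= cV j) ->
  \sum_(j : V) cV j + \sum_(a : F) cF a = 1 ->
  [/\ (forall a, 0 < cF a),
      (forall j, 0 <= cV j),
      (forall j a, e j a -> 0 <= c_edge e cV cF j a),
      (forall j, cV j - \sum_(a : F | e j a) c_edge e cV cF j a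
                 = 1 - (#|[set a : F | e j a]|)%:R)
    & (forall a, cF a + \sum_(j : V | e j a) c_edge e cV cF j a = 1)].
Proof.
move=> [conn acyc] cFp cVp tot.
set r := fg_adj e.
have rsym : symmetric r by move=> [x|x] [y|y].
have rirr : irreflexive r by move=> [x|x].
set w := fg_weight cV cF.
have W1 : \sum_z w z = 1 by rewrite big_sumType.
have ce : forall j a, c_edge e cV cF j a =
    \sum_(z | connect (rm r (inl j) (inr a)) (inl j) z) w z by [].
have wge0 : forall z, 0 <= w z by move=> [x|x] //=; apply: ltW.
split => //.
- by move=> j a _; rewrite ce; apply: sumr_ge0.
- move=> j.
  have H : forall a, e j a -> \sum_(z | connect (rm r (inl j) (inr a)) (inr a) z) w z
      = 1 - c_edge e cV cF j a.
    move=> a eja; rewrite ce -W1 [\sum_z w z](bigID (fun z => connect (rm r (inl j) (inr a)) (inl j) z)) /=.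
    rewrite addrC addrK; apply: eq_bigl => z.
    have := split rsym conn (inl j) (inr a) z eja.
    case P: (connect _ (inl j) z); case Q: (connect _ (inr a) z) => //= _.
    have := noback rirr acyc (inl j) (inr a) eja.
    by rewrite (connect_trans Q) // (sym_connect_sym (rm_sym rsym _ _)).
  have := part_sum rsym rirr acyc conn _ w (inl j).
  rewrite big_sumType /= big_pred0_eq add0r (eq_bigr _ H) sumrB.
  have := W1; rewrite (@sumD1 _ _ w (inl j)) /= => W1'.
  have -> : \sum_(a | e j a) (1 : R) = #|[set a | e j a]|%:R.
    by rewrite -sumr_const; apply: eq_bigl => a; rewrite !inE.
  move: W1'; set S1 := \sum_(z | z != inl j) w z; set S2 := \sum_(a | e j a) _.
  move=> W1' E; lra.
- move=> a.
  have := part_sum rsym rirr acyc conn _ w (inr a).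
  rewrite big_sumType /= [X in _ + X]big_pred0_eq addr0.
  have := W1; rewrite (@sumD1 _ _ w (inr a)) /= => W1'.
  move: W1'; set S1 := \sum_(z | z != inr a) w z; set S2 := \sum_(j | e j a) _.
  move=> W1' E.
  have E2 : \sum_(j | e j a) c_edge e cV cF j a = S2.
    apply: eq_bigr => j _; rewrite ce; apply: eq_bigl => z.
    by apply: eq_connect => p q; rewrite /rm; congr (_ && ~~ _);
      case: (p == _); case: (q == _); case: (p == _); case: (q == _).
  lra.
Qed.
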